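(* Let $w\in S_n$ and $1\le i<j<k<\ell\le n$ with $w_\ell<w_j<w_k<w_i$. Define $\tau\in S_n$ by $\tau_m=w_m$ for $m\notin\{j,k\}$, $\tau_j=w_k$, $\tau_k=w_j$. Let $x\in\mathfrak{sl}_n(\mathbb C)$ and let $H\subseteq\mathfrak{sl}_n(\mathbb C)$ be a Hessenberg space. If the Schubert cell $C_{w^{-1}}$ is contained in the adjoint Hessenberg variety $\mathcal B(x,H)$, then $\dot\tau^{-1}B\in\mathcal B(x,H)$.
   Context: $G=SL_n(\mathbb C)$, $B$ the upper triangular matrices in $G$, $\mathfrak b$ its Lie algebra. Permutations are written in one-line notation $w=[w_1\cdots w_n]$ with $w_i=w(i)$; $\dot w$ denotes a scalar multiple of the permutation matrix sending $e_i\mapsto e_{w(i)}$ lying in $G$. $C_w=B\dot wB/B\subseteq G/B$. A Hessenberg space is a subspace $H\subseteq\mathfrak{sl}_n(\mathbb C)$ with $[\mathfrak b,H]\subseteq H$; for $x\in\mathfrak{sl}_n(\mathbb C)$, $\mathcal B(x,H)=\{gB\in G/B: g^{-1}xg\in H\}$. *)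

(* Defs.v *)
From HB Require Import structures.
From mathcomp Require Import all_boot all_order all_algebra all_fingroup.
From mathcomp Require Import complex.
From mathcomp Require Import Rstruct.
Set Implicit Arguments. Unset Strict Implicit. Unset Printing Implicit Defensive.
Import Order.TTheory GRing.Theory Num.Theory.
Local Open Scope ring_scope.

Notation C := (complex Rdefinitions.R).

Section Defs.
Variable n : nat.

Definition upper (A : 'M[C]_n) : Prop := forall i j : 'I_n, (j < i)%N -> A i j = 0.

Definition in_SL (g : 'M[C]_n) : Prop := \det g = 1.

Definition in_B (g : 'M[C]_n) : Prop := in_SL g /\ upper g.

Definition in_sl (X : 'M[C]_n) : Prop := \tr X = 0.

Definition in_b (X : 'M[C]_n) : Prop := in_sl X /\ upper X.

Definition hessenberg_space (H : {vspace 'M[C]_n}) : Prop :=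
  (forall h, h \in H -> in_sl h) /\
  (forall X h, in_b X -> h \in H -> X *m h - h *m X \in H).

(* gB \in B(x,H), for g in G: g^{-1} x g \in H *)
Definition in_BxH (x : 'M[C]_n) (H : {vspace 'M[C]_n}) (g : 'M[C]_n) : Prop :=
  in_SL g /\ invmx g *m x *m g \in H.

(* permutation matrix sending e_i to e_{w(i)} (column vectors): entry (a,b) = [w b = a] *)
Definition pmat (w : 'S_n) : 'M[C]_n := \matrix_(a, b) (w b == a)%:R.

Definition is_dot (w : 'S_n) (wd : 'M[C]_n) : Prop :=
  in_SL wd /\ exists c : C, wd = c *: pmat w.

End Defs.

(* Main.v *)
Require Import Defs.
From HB Require Import structures.
From mathcomp Require Import all_boot all_order all_algebra all_fingroup.
From mathcomp Require Import complex Rstruct ring zify.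
Import Order.TTheory GRing.Theory Num.Theory.
Local Open Scope ring_scope.
Set Implicit Arguments. Unset Strict Implicit.

Section Basic.
Variable n : nat.
Local Notation M := ('M[C]_n).
Local Notation E := (@delta_mx C n n).

Lemma inv_uniq (A B : M) : A *m B = 1%:M -> invmx A = B.
Proof.
move=> AB; have [uA _] := mulmx1_unit AB.
by rewrite -[RHS](mulKmx uA) AB mulmx1.
Qed.

Lemma upperM (A B : M) : upper A -> upper B -> upper (A *m B).
Proof.
move=> uA uB r c cr; rewrite !mxE big1 // => m _.
case: (ltnP m r) => hm; first by rewrite uA // mul0r.
by rewrite uB ?mulr0 //; apply: leq_trans cr hm.
Qed.

Lemma in_BM (A B : M) : in_B A -> in_B B -> in_B (A *m B).
Proof.
move=> [dA uA] [dB uB]; split; last exact: upperM.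
by rewrite /in_SL det_mulmx dA dB mulr1.
Qed.

Lemma in_B1 : in_B (1%:M : M).
Proof. by split; [rewrite /in_SL det1|move=> r c cr; rewrite mxE; case: eqP cr => // ->; rewrite ltnn]. Qed.

Lemma SL_unit (A : M) : in_SL A -> A \in unitmx.
Proof. by rewrite /in_SL unitmxE => ->; rewrite unitr1. Qed.

Lemma invmxM (A B : M) : A \in unitmx -> B \in unitmx ->
  invmx (A *m B) = invmx B *m invmx A.
Proof.
move=> uA uB; apply: inv_uniq.
by rewrite mulmxA -(mulmxA A) mulmxV // mulmx1 mulmxV.
Qed.

Lemma pmat_delta (w : 'S_n) a b : pmat w *m E a b = E (w a) b.
Proof.
apply/matrixP=> r c; rewrite !mxE (bigD1 a) //= big1 ?addr0.
  by rewrite !mxE eqxx /= eq_sym -natrM mulnb.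
move=> m /negbTE hm; rewrite !mxE hm /= mulr0 //.
Qed.

Lemma pmatE (w : 'S_n) : pmat w = (perm_mx w)^T.
Proof. by apply/matrixP=> r c; rewrite !mxE. Qed.

Lemma pmat_tr (w : 'S_n) : (pmat w)^T = pmat (w^-1)%g.
Proof. by rewrite !pmatE trmxK tr_perm_mx invgK. Qed.

Lemma pmatV (w : 'S_n) : pmat w *m (pmat w)^T = 1%:M.
Proof. by rewrite !pmatE trmxK tr_perm_mx -perm_mxM mulVg perm_mx1. Qed.

Lemma pmatVl (w : 'S_n) : (pmat w)^T *m pmat w = 1%:M.
Proof. by rewrite !pmatE trmxK tr_perm_mx -perm_mxM mulgV perm_mx1. Qed.

Lemma pmatM (s w : 'S_n) : pmat (s * w)%g = pmat w *m pmat s.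
Proof. by rewrite !pmatE perm_mxM trmx_mul. Qed.

Lemma delta_pmat (w : 'S_n) a b : E a b *m (pmat w)^T = E a (w b).
Proof.
rewrite -[LHS]trmxK trmx_mul trmxK trmx_delta pmat_delta.
by rewrite trmx_delta.
Qed.

Definition Ad (w : 'S_n) (A : M) := pmat w *m A *m (pmat w)^T.

Lemma Ad_delta (w : 'S_n) a b : Ad w (E a b) = E (w a) (w b).
Proof. by rewrite /Ad pmat_delta delta_pmat. Qed.

Lemma AdD w (A B : M) : Ad w (A + B) = Ad w A + Ad w B.
Proof. by rewrite /Ad mulmxDr mulmxDl. Qed.

Lemma AdZ w c (A : M) : Ad w (c *: A) = c *: Ad w A.
Proof. by rewrite /Ad -scalemxAr -scalemxAl. Qed.

Lemma Ad0 w : Ad w 0 = 0.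
Proof. by rewrite /Ad mulmx0 mul0mx. Qed.

Lemma Ad_sum w (I : finType) (P : pred I) (F : I -> M) :
  Ad w (\sum_(m | P m) F m) = \sum_(m | P m) Ad w (F m).
Proof. by rewrite /Ad mulmx_sumr mulmx_suml. Qed.

Lemma AdM s w (A : M) : Ad (s * w)%g A = Ad w (Ad s A).
Proof. by rewrite /Ad pmatM trmx_mul !mulmxA. Qed.


Section Mono.
Variable V : M -> Prop.
Hypothesis hZ : forall c y, V y -> V (c *: y).
Hypothesis hop : forall (p q : 'I_n) y, (p < q)%N -> V y -> V (E p q *m y - y *m E p q).

Lemma rowmove (a b p : 'I_n) : V (E a b) -> (p <= a)%N -> p != b -> V (E p b).
Proof.
move=> hV; rewrite leq_eqVlt => /orP[/eqP/val_inj -> //|pa] pb.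
have := hop pa hV; rewrite mul_delta_mx mul_delta_mx_cond.
by rewrite eq_sym (negbTE pb) mulr0n subr0.
Qed.

Lemma colmove (a b q : 'I_n) : V (E a b) -> (b <= q)%N -> q != a -> V (E a q).
Proof.
move=> hV; rewrite leq_eqVlt => /orP[/eqP/val_inj <- //|bq] qa.
have := hop bq hV; rewrite mul_delta_mx mul_delta_mx_cond.
rewrite (negbTE qa) mulr0n sub0r => /(hZ (-1)).
by rewrite scaleN1r opprK.
Qed.

Lemma mono (a b a' b' : 'I_n) : V (E a b) -> (a' <= a)%N -> (b <= b')%N ->
  a' != b' -> (a' != b) || (b' != a) -> V (E a' b').
Proof.
move=> hV ha hb ab' /orP[h|h].
  by apply: colmove hb _; [apply: rowmove ha h|rewrite eq_sym].
by apply: rowmove ha ab'; apply: colmove hb h.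
Qed.
End Mono.


Lemma upper_det (A : M) : upper A -> \det A = \prod_i A i i.
Proof.
move=> uA; rewrite -det_tr det_trig; first by apply: eq_bigr => i _; rewrite mxE.
by apply/is_trig_mxP => r s rs; rewrite mxE uA.
Qed.

Lemma unip_B (p q : 'I_n) (c : C) : (p < q)%N -> in_B (1%:M + c *: E p q).
Proof.
move=> pq; have up : upper (1%:M + c *: E p q).
  move=> r s sr; rewrite !mxE; case: eqP => [rs|_]; first by move: sr; rewrite rs ltnn.
  case: (r =P p) => [rp|]; case: (s =P q) => [sq|] //=; rewrite ?mulr0 ?addr0 //.
  by move: sr; rewrite rp sq => /(ltn_trans pq); rewrite ltnn.
split => //; rewrite /in_SL upper_det // big1 // => r _.
rewrite !mxE eqxx /=; case: (r =P p) => [rp|]; case: (r =P q) => [rq|] //=;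
  rewrite ?mulr0 ?addr0 //.
by move: pq; rewrite -rp -rq ltnn.
Qed.

Lemma EE (p q : 'I_n) : p != q -> E p q *m E p q = 0.
Proof. by move=> pq; rewrite mul_delta_mx_cond eq_sym (negbTE pq) mulr0n. Qed.


Definition tv (p q : 'I_n) (u v : C) : 'rV[C]_n :=
  \row_m (if m == p then u else if m == q then v else 1).

Lemma tv_prod (p q : 'I_n) u v : p != q -> \prod_m tv p q u v 0 m = u * v.
Proof.
move=> pq; rewrite (bigD1 p) // (bigD1 q) 1?eq_sym //= big1 ?mulr1.
  by rewrite !mxE eqxx eq_sym (negbTE pq) eqxx.
by move=> m /andP[mp mq]; rewrite mxE (negbTE mp) (negbTE mq).
Qed.

Lemma tv_nz (p q : 'I_n) u v : u != 0 -> v != 0 -> forall m, tv p q u v 0 m != 0.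
Proof. by move=> hu hv m; rewrite mxE; case: ifP => // _; case: ifP => // _; rewrite oner_eq0. Qed.

Lemma diag_B (t : 'rV[C]_n) : \prod_m t 0 m = 1 -> in_B (diag_mx t).
Proof.
move=> ht; split; first by rewrite /in_SL det_diag.
move=> r s sr; rewrite mxE; case: eqP sr => // ->; by rewrite ltnn.
Qed.

Lemma diag_inv (t : 'rV[C]_n) : (forall m, t 0 m != 0) ->
  invmx (diag_mx t) = diag_mx (\row_m (t 0 m)^-1).
Proof.
move=> ht; apply: inv_uniq; rewrite mulmx_diag.
apply/matrixP => r s; rewrite !mxE.
by case: (r == s) => //=; rewrite mulfV.
Qed.

Ltac killneq := repeat match goal with
 | h : is_true (?a != ?b) |- context [?a == ?b] => rewrite (negbTE h)
 | h : is_true (?a != ?b) |- context [?b == ?a] => rewrite [b == a]eq_sym (negbTE h)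
 end.
Lemma oeq (a b : 'I_n) : (a == b) = (nat_of_ord a == nat_of_ord b). Proof. by []. Qed.

Section SDef.
Variables (w : 'S_n) (H : {vspace M}).
Definition S (y : M) := forall b, in_B b -> Ad w (invmx b *m y *m b) \in H.

Lemma S0 : S 0.
Proof. by move=> b _; rewrite mulmx0 mul0mx Ad0 mem0v. Qed.

Lemma SD y z : S y -> S z -> S (y + z).
Proof. move=> hy hz b hb; rewrite mulmxDr mulmxDl AdD. exact: (memvD (hy b hb) (hz b hb)). Qed.

Lemma SZ c y : S y -> S (c *: y).
Proof. move=> hy b hb; rewrite -scalemxAr -scalemxAl AdZ. exact: (memvZ c (hy b hb)). Qed.

Lemma SB y z : S y -> S z -> S (y - z).
Proof. move=> hy hz; have := SD hy (SZ (-1) hz); by rewrite scaleN1r. Qed.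

Lemma S_sum (I : finType) (P : pred I) (F : I -> M) :
  (forall m, P m -> S (F m)) -> S (\sum_(m | P m) F m).
Proof. move=> hF; apply: (@big_ind _ S); [exact: S0| move=> a b; exact: SD | exact: hF]. Qed.

Lemma S_conj y g : S y -> in_B g -> S (invmx g *m y *m g).
Proof.
move=> hy hg b hb.
have ug : g \in unitmx by apply: SL_unit; case: hg.
have ub : b \in unitmx by apply: SL_unit; case: hb.
have -> : invmx b *m (invmx g *m y *m g) *m b = invmx (g *m b) *m y *m (g *m b).
  by rewrite invmxM // !mulmxA.
exact: (hy _ (in_BM hg hb)).
Qed.

Lemma comb (y a b c : M) : b - a = (2^-1 : C) *: ((y - a + b - c) - (y + a - b - c)).
Proof. apply/matrixP=> r s; rewrite !mxE. by field. Qed.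
Lemma exp1 (A y : M) : (1%:M + A) *m y *m (1%:M - A) = y - y *m A + A *m y - A *m y *m A.
Proof. rewrite mulmxDl mul1mx !mulmxBr !mulmx1 mulmxDl.
apply/matrixP=> r s; rewrite !mxE. by ring. Qed.
Lemma exp2 (A y : M) : (1%:M - A) *m y *m (1%:M + A) = y + y *m A - A *m y - A *m y *m A.
Proof. rewrite mulmxBl mul1mx !mulmxDr !mulmx1 mulmxBl.
apply/matrixP=> r s; rewrite !mxE. by ring. Qed.

Lemma S_op (p q : 'I_n) y : (p < q)%N -> S y -> S (E p q *m y - y *m E p q).
Proof.
move=> pq hy.
have npq : p != q by rewrite neq_ltn pq.
have hB1 : in_B (1%:M + E p q) by rewrite -[E p q]scale1r; apply: unip_B.
have hB2 : in_B (1%:M - E p q) by rewrite -scaleN1r; apply: unip_B.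
have e1 : (1%:M + E p q) *m (1%:M - E p q) = 1%:M.
  by rewrite mulmxBr !mulmxDl !mul1mx mulmx1 EE // addr0 addrK.
have e2 : (1%:M - E p q) *m (1%:M + E p q) = 1%:M.
  by rewrite mulmxDr !mulmxBl !mul1mx mulmx1 EE // subr0 subrK.
have i1 := inv_uniq e1; have i2 := inv_uniq e2.
have -> : E p q *m y - y *m E p q = (2^-1 : C) *:
   ((invmx (1%:M - E p q) *m y *m (1%:M - E p q)) - (invmx (1%:M + E p q) *m y *m (1%:M + E p q))).
  by rewrite i1 i2 exp1 exp2 -comb.
exact: (SZ _ (SB (S_conj hy hB2) (S_conj hy hB1))).
Qed.



Lemma S_tor0 (t : 'rV[C]_n) y :
  (forall m, t 0 m != 0) -> \prod_m t 0 m = 1 -> S y ->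
  S (\matrix_(r, s) (y r s * (t 0 s / t 0 r))).
Proof.
move=> hz hp hy.
have hc := S_conj hy (diag_B hp).
have e : invmx (diag_mx t) *m y *m diag_mx t = \matrix_(r, s) (y r s * (t 0 s / t 0 r)).
  rewrite diag_inv // mul_diag_mx mul_mx_diag.
  apply/matrixP => r s; rewrite !mxE.
  by field.
by rewrite -e.
Qed.

Lemma S_tor (t : 'rV[C]_n) (al be : C) y :
  (forall m, t 0 m != 0) -> \prod_m t 0 m = 1 -> S y ->
  S (\matrix_(r, s) (y r s * (al + be * (t 0 s / t 0 r)))).
Proof.
move=> hz hp hy.
have e : \matrix_(r, s) (y r s * (al + be * (t 0 s / t 0 r))) =
   al *: y + be *: \matrix_(r, s) (y r s * (t 0 s / t 0 r)).
  by apply/matrixP => r s; rewrite !mxE; ring.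
rewrite e; exact: (SD (SZ al hy) (SZ be (S_tor0 hz hp hy))).
Qed.

Lemma S_extract (p q c : 'I_n) y : p != q -> c != p -> c != q -> S y ->
  S (y p q *: E p q).
Proof.
move=> npq ncp ncq hy.
have m1 : (-1 : C) != 0 by rewrite oppr_eq0 oner_eq0.
have two : (2 : C) != 0 by rewrite pnatr_eq0.
have npc : p != c by rewrite eq_sym.
have p1 : \prod_m tv p q (-1) (-1) 0 m = 1 by rewrite tv_prod // mulrNN mulr1.
have p2 : \prod_m tv p q 2 2^-1 0 m = 1 by rewrite tv_prod // mulfV.
have p3 : \prod_m tv p c 2 2^-1 0 m = 1 by rewrite tv_prod // mulfV.
have h1 := S_tor (2^-1) (2^-1) (tv_nz p q m1 m1) p1 hy.
have h2 := S_tor (4 / 3) (- (4 / 3)) (tv_nz p q two (invr_neq0 two)) p2 h1.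
have h3 := S_tor (4 / 3) (- (2 / 3)) (tv_nz p c two (invr_neq0 two)) p3 h2.
match type of h3 with S ?Z => have e : Z = y p q *: E p q; last by rewrite -e end.
apply/matrixP => r s; rewrite !mxE.
have [erp|rp] := eqVneq r p; have [erq|rq] := eqVneq r q; have [erc|rc] := eqVneq r c;
have [esp|sp] := eqVneq s p; have [esq|sq] := eqVneq s q; have [esc|sc] := eqVneq s c;
subst; rewrite ?eqxx; try (match goal with h : is_true (?a != ?a) |- _ => by rewrite eqxx in h end);
killneq; rewrite /=; by field.
Qed.

Hypothesis hH : hessenberg_space H.

Lemma S_in y : S y -> Ad w y \in H.
Proof. by move=> hy; have := hy _ in_B1; rewrite invmx1 mul1mx mulmx1. Qed.

Lemma in_b_delta (p q : 'I_n) : (p < q)%N -> in_b (E p q).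
Proof.
move=> pq; split.
  rewrite /in_sl /mxtrace big1 // => r _; rewrite mxE.
  case: eqP => [rp|] //=; case: eqP => [rq|] //=.
  by move: pq; rewrite -rp -rq ltnn.
move=> r s sr; rewrite mxE; case: (r =P p) => [rp|]; case: (s =P q) => [sq|] //=.
by move: sr; rewrite rp sq => /(ltn_trans pq); rewrite ltnn.
Qed.

Lemma H_op (p q : 'I_n) h : (p < q)%N -> h \in H -> E p q *m h - h *m E p q \in H.
Proof. by move=> pq hh; apply: hH.2 => //; apply: in_b_delta. Qed.

Lemma HZ c (h : M) : h \in H -> c *: h \in H.
Proof. exact: memvZ. Qed.

Lemma reach (p q a' b' P Q : 'I_n) : S (E p q) ->
  (a' <= p)%N -> (q <= b')%N -> a' != b' -> (a' != q) || (b' != p) ->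
  (P <= w a')%N -> (w b' <= Q)%N -> P != Q -> (P != w b') || (Q != w a') ->
  E P Q \in H.
Proof.
move=> hS h1 h2 h3 h4 h5 h6 h7 h8.
have hS' : S (E a' b') := mono SZ S_op hS h1 h2 h3 h4.
have hH' := S_in hS'; rewrite Ad_delta in hH'.
exact: (mono (V := fun h => h \in H) HZ H_op hH' h5 h6 h7 h8).
Qed.

Section Key.
Variables (i j k l : 'I_n).
Hypotheses (hij : (i < j)%N) (hjk : (j < k)%N) (hkl : (k < l)%N)
  (hw1 : (w l < w j)%N) (hw2 : (w j < w k)%N) (hw3 : (w k < w i)%N).

Ltac tonat := repeat match goal with h : is_true (~~ (?a == ?b)) |- _ => move: h end;
  rewrite ?(inj_eq perm_inj) ?oeq; intros.
Ltac side := tonat; move: hw1 hw2 hw3; cbv delta [reverse_coercion]; lia.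

Lemma key (p q : 'I_n) : p != q -> S (E p q) ->
  E ((tperm j k * w)%g p) ((tperm j k * w)%g q) \in H.
Proof.
rewrite !permM.
have [->|pj] := eqVneq p j.
  rewrite tpermL.
  have [->|qk] := eqVneq q k.
    by rewrite tpermR => _ hS; apply: (reach (a' := i) (b' := l) hS); side.
  have [->|qj] := eqVneq q j; first by move=> /negP hjj; exfalso; apply: hjj.
  rewrite tpermD; try by rewrite eq_sym.
  have [->|qi] := eqVneq q i.
    by move=> _ hS; apply: (reach (a' := i) (b' := l) hS); side.
  by move=> _ hS; apply: (reach (a' := i) (b' := q) hS); side.
have [->|pk] := eqVneq p k.
  rewrite tpermR.
  have [->|qj] := eqVneq q j.
    by rewrite tpermL => _ hS; apply: (reach (a' := i) (b' := l) hS); side.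
  have [->|qk] := eqVneq q k; first by move=> /negP hjj; exfalso; apply: hjj.
  rewrite tpermD; try by rewrite eq_sym.
  by move=> _ hS; apply: (reach (a' := k) (b' := q) hS); side.
rewrite (tpermD (x := j)); try by rewrite eq_sym.
have [->|qj] := eqVneq q j.
  by rewrite tpermL => _ hS; apply: (reach (a' := p) (b' := j) hS); side.
have [->|qk] := eqVneq q k.
  rewrite tpermR.
  have [->|pl] := eqVneq p l.
    by move=> _ hS; apply: (reach (a' := i) (b' := l) hS); side.
  by move=> _ hS; apply: (reach (a' := p) (b' := l) hS); side.
rewrite tpermD; try by rewrite eq_sym.
by move=> npq hS; apply: (reach (a' := p) (b' := q) hS); side.
Qed.

Lemma alg (a b : C) (A B R : M) :
  a *: B + (b *: A + R) = a *: A + (b *: B + R) + (b - a) *: (A - B).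
Proof. by apply/matrixP => r c; rewrite !mxE; ring. Qed.

Lemma Ad_tau_D (d : 'I_n -> C) :
  Ad (tperm j k * w)%g (\sum_p d p *: E p p) =
  Ad w (\sum_p d p *: E p p) + (d k - d j) *: (E (w j) (w j) - E (w k) (w k)).
Proof.
have jk : j != k by apply/eqP => e; move: (hjk); rewrite e ltnn.
rewrite !Ad_sum.
under eq_bigr => p _ do rewrite AdZ Ad_delta permM.
under [X in _ = X + _]eq_bigr => p _ do rewrite AdZ Ad_delta.
rewrite [in LHS](bigD1 j) // [in LHS](bigD1 k) /=; last by rewrite eq_sym.
rewrite [in RHS](bigD1 j) // [in RHS](bigD1 k) /=; last by rewrite eq_sym.
rewrite tpermL tpermR.
under eq_bigr => p /andP[pj pk] do rewrite tpermD 1?eq_sym //.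
exact: alg.
Qed.

Lemma mulED (d : 'I_n -> C) (a b : 'I_n) :
  E a b *m (\sum_p d p *: E p p) = d b *: E a b.
Proof.
rewrite mulmx_sumr (bigD1 b) //= big1 ?addr0.
  by rewrite -scalemxAr mul_delta_mx.
by move=> p pb; rewrite -scalemxAr mul_delta_mx_cond eq_sym (negbTE pb) mulr0n scaler0.
Qed.

Lemma mulDE (d : 'I_n -> C) (a b : 'I_n) :
  (\sum_p d p *: E p p) *m E a b = d a *: E a b.
Proof.
rewrite mulmx_suml (bigD1 a) //= big1 ?addr0.
  by rewrite -scalemxAl mul_delta_mx.
by move=> p pa; rewrite -scalemxAl mul_delta_mx_cond (negbTE pa) mulr0n scaler0.
Qed.

Lemma pick3 (p q : 'I_n) : exists c : 'I_n, (c != p) && (c != q).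
Proof.
have [h|h] := boolP ((i != p) && (i != q)); first by exists i.
have [h'|h'] := boolP ((j != p) && (j != q)); first by exists j.
exists k; move: h h'; rewrite !oeq; lia.
Qed.

Variable x : M.
Hypothesis hx : S x.

Lemma main_H : Ad (tperm j k * w)%g x \in H.
Proof.
pose Off := \sum_p \sum_(q | q != p) x p q *: E p q.
pose D := \sum_p x p p *: E p p.
have ex : x = D + Off.
  rewrite {1}(matrix_sum_delta x) /D /Off -big_split /=; apply: eq_bigr => p _.
  by rewrite (bigD1 p).
have hoff : forall p q : 'I_n, p != q -> S (x p q *: E p q).
  move=> p q pq; have [c /andP[cp cq]] := pick3 p q.
  exact: (S_extract pq cp cq hx).
have SOff : S Off.
  apply: S_sum => p _; apply: S_sum => q qp; apply: hoff; by rewrite eq_sym.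
have SD : S D.
  have -> : D = x - Off by rewrite ex addrK.
  exact: (SB hx SOff).
rewrite ex AdD; apply: memvD.
  rewrite /D (Ad_tau_D (fun p => x p p)).
  apply: memvD; first exact: (S_in SD).
  have [e|ne] := eqVneq (x k k - x j j) 0; first by rewrite e scale0r mem0v.
  apply: memvZ.
  have h1 := S_op hjk SD.
  have e1 : E j k *m D - D *m E j k = (x k k - x j j) *: E j k.
    by rewrite /D (mulED (fun p => x p p) j k) (mulDE (fun p => x p p) j k) scalerBl.
  rewrite e1 in h1.
  have h2 : S (E j k).
    have h4 := SZ (x k k - x j j)^-1 h1.
    have e2 : (x k k - x j j)^-1 *: ((x k k - x j j) *: E j k) = E j k.
      by rewrite scalerA mulVf // scale1r.
    by rewrite e2 in h4.
  have h3 : E (w k) (w j) \in H.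
    apply: (reach (a' := i) (b' := l) h2); side.
  have h5 := H_op hw2 h3.
  by rewrite !mul_delta_mx in h5.
rewrite /Off Ad_sum; apply: memv_suml => p _; rewrite Ad_sum; apply: memv_suml => q qp.
rewrite AdZ.
have [e|nz] := eqVneq (x p q) 0; first by rewrite e scale0r mem0v.
apply: memvZ.
have pq : p != q by rewrite eq_sym.
have h4 := SZ (x p q)^-1 (hoff p q pq).
have e2 : (x p q)^-1 *: (x p q *: E p q) = E p q by rewrite scalerA mulVf // scale1r.
rewrite e2 in h4.
rewrite Ad_delta; exact: (key pq h4).
Qed.
End Key.
End SDef.


Lemma scal_nz (P : M) c : (0 < n)%N -> \det (c *: P) = 1 -> c != 0.
Proof.
move=> n0 h; apply/eqP => c0; move: h; rewrite c0 detZ expr0n.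
by rewrite (negbTE (lt0n_neq0 n0)) mul0r => /eqP; rewrite eq_sym oner_eq0.
Qed.

Lemma inv_dot (w : 'S_n) c : c != 0 -> invmx (c *: pmat w) = c^-1 *: (pmat w)^T.
Proof.
move=> c0; apply: inv_uniq.
by rewrite -scalemxAr -scalemxAl scalerA mulVf // scale1r pmatV.
Qed.

End Basic.

Unset Implicit Arguments. Set Strict Implicit.

Theorem lemma4p3 (n : nat) (w : 'S_n) (i j k l : 'I_n)
  (hij : (i < j)%N) (hjk : (j < k)%N) (hkl : (k < l)%N)
  (hw1 : (w l < w j)%N) (hw2 : (w j < w k)%N) (hw3 : (w k < w i)%N)
  (x : 'M[C]_n) (hx : in_sl x)
  (H : {vspace 'M[C]_n}) (hH : hessenberg_space H)
  (wd : 'M[C]_n) (hwd : is_dot (w^-1)%g wd)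
  (td : 'M[C]_n) (htd : is_dot (tperm j k * w)%g td) :
  (forall b1 b2 : 'M[C]_n, in_B b1 -> in_B b2 -> in_BxH x H (b1 *m wd *m b2)) ->
  in_BxH x H (invmx td).
Proof.
move=> hyp.
have n0 : (0 < n)%N := leq_ltn_trans (leq0n i) (ltn_ord i).
case: hwd => dwd [cw ewd]; case: htd => dtd [ct etd].
have cw0 : cw != 0 by apply: (@scal_nz _ (pmat (w^-1)%g) cw n0); rewrite -ewd.
have ct0 : ct != 0 by apply: (@scal_nz _ (pmat (tperm j k * w)%g) ct n0); rewrite -etd.
have Sx : S w H x.
  move=> b hb; have [_ h] := hyp b 1%:M hb (in_B1 n).
  have ub := SL_unit hb.1; have uwd := SL_unit dwd.
  have e : invmx (b *m wd *m 1%:M) *m x *m (b *m wd *m 1%:M) = Ad w (invmx b *m x *m b).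
    rewrite mulmx1 invmxM // ewd inv_dot // pmat_tr invgK -pmat_tr /Ad.
    rewrite -!scalemxAr -!scalemxAl scalerA mulfV // scale1r.
    by rewrite !mulmxA.
  by rewrite -e.
split; first by rewrite /in_SL det_inv dtd invr1.
rewrite invmxK etd inv_dot //.
have e : ct *: pmat (tperm j k * w)%g *m x *m (ct^-1 *: (pmat (tperm j k * w)%g)^T)
   = Ad (tperm j k * w)%g x.
  by rewrite -scalemxAr -!scalemxAl scalerA mulVf // scale1r.
rewrite e; exact: (main_H hH hij hjk hkl hw1 hw2 hw3 Sx).
Qed.
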